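(* Let $(G,+)$ be a finite abelian group with identity $0$, and let $\cdot$ be a binary operation on $G$ making $(G,+,\cdot)$ a commutative associative (not necessarily unital) ring in which every element has an inverse under the circle operation $x\circ y=x+y+x\cdot y$. For $g\in G$ define $\tau_g:G\to G$ by $\tau_g(x)=g\circ x$, and let $T=\{\tau_g: g\in G\}$, a regular abelian subgroup of $\mathrm{Hol}(G)$. Then for each prime $p$ dividing $|G|$, the Sylow $p$-subgroup of $T$ is $T_p=\{\tau_g: g\in G_p\}$, where $G_p$ is the Sylow $p$-subgroup of $(G,+)$.
   Context: $\mathrm{Hol}(G)=\rho(G)\cdot\mathrm{Aut}(G)\subseteq\mathrm{Perm}(G)$ is the holomorph of $G$, with group operation composition of permutations. Under the hypotheses, $(G,\circ)$ is an abelian group with identity $0$, and $T$ (under composition) is a regular abelian subgroup of $\mathrm{Hol}(G)$, with $\tau_g\circ\tau_h=\tau_{g\circ h}$. *)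

(* Defs.v *)
From mathcomp Require Import all_boot all_order all_algebra all_fingroup all_solvable.
Set Implicit Arguments. Unset Strict Implicit. Unset Printing Implicit Defensive.
Import GRing.Theory.
Local Open Scope ring_scope.

Definition comm_rng_mul (V : finZmodType) (mul : V -> V -> V) : Prop :=
  [/\ associative mul, commutative mul,
      left_distributive mul +%R & right_distributive mul +%R].

Definition circle (V : finZmodType) (mul : V -> V -> V) (x y : V) : V :=
  x + y + mul x y.

Definition circle_invertible (V : finZmodType) (mul : V -> V -> V) : Prop :=
  forall x : V, exists y : V, circle mul x y = 0 /\ circle mul y x = 0.

Definition tau_set (V : finZmodType) (mul : V -> V -> V) (A : {set V})
  : {set {perm V}} :=
  [set s : {perm V} | [exists g in A, [forall x, s x == circle mul g x]]].

Definition T_set (V : finZmodType) (mul : V -> V -> V) : {set {perm V}} :=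
  tau_set mul [set: V].

(* Main.v *)
Require Import Defs.
From mathcomp Require Import all_boot all_order all_algebra all_fingroup all_solvable.
Set Implicit Arguments. Unset Strict Implicit. Unset Printing Implicit Defensive.
Import GRing.Theory FinRing.Theory.

Local Open Scope group_scope.

Lemma mul0l_ (V : finZmodType) (mul : V -> V -> V) (H : comm_rng_mul mul) x :
  mul 0%R x = 0%R.
Proof.
case: H => _ _ Dl _.
have := Dl 0%R 0%R x; rewrite addr0 => E.
by rewrite -[RHS](subrr (mul 0%R x)) {2}E addrK.
Qed.

Lemma mul0r_ (V : finZmodType) (mul : V -> V -> V) (H : comm_rng_mul mul) x :
  mul x 0%R = 0%R.
Proof. by case: (H) => _ C _ _; rewrite C (mul0l_ H). Qed.

Lemma circle0x (V : finZmodType) (mul : V -> V -> V) (H : comm_rng_mul mul) x :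
  circle mul 0%R x = x.
Proof. by rewrite /circle (mul0l_ H) add0r addr0. Qed.

Lemma circleC (V : finZmodType) (mul : V -> V -> V) (H : comm_rng_mul mul) x y :
  circle mul x y = circle mul y x.
Proof. by case: (H) => _ C _ _; rewrite /circle C (addrC x). Qed.

Lemma circleA (V : finZmodType) (mul : V -> V -> V) (H : comm_rng_mul mul) x y z :
  circle mul (circle mul x y) z = circle mul x (circle mul y z).
Proof.
case: (H) => A C Dl Dr; rewrite /circle !Dl !Dr A.
rewrite -!addrA; congr (x + _)%R; congr (y + _)%R.
rewrite [LHS]addrCA; congr (z + _)%R.
rewrite [RHS]addrCA; congr (_ + _)%R.
by rewrite addrCA.
Qed.

Lemma mulMn_ (V : finZmodType) (mul : V -> V -> V) (H : comm_rng_mul mul) x y n :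
  mul (x *+ n)%R y = (mul x y *+ n)%R.
Proof.
case: (H) => _ _ Dl _.
elim: n => [|n IH]; first by rewrite !mulr0n (mul0l_ H).
by rewrite !mulrS Dl IH.
Qed.

Lemma circle_inj (V : finZmodType) (mul : V -> V -> V) (H : comm_rng_mul mul)
  (Hc : circle_invertible mul) g : injective (circle mul g).
Proof.
move=> x y E; have [g' [_ Hg']] := Hc g.
by rewrite -(circle0x H x) -(circle0x H y) -Hg' !(circleA H) E.
Qed.

Definition tau (V : finZmodType) (mul : V -> V -> V) (H : comm_rng_mul mul)
  (Hc : circle_invertible mul) g : {perm V} := perm (@circle_inj V mul H Hc g).

Lemma tauE (V : finZmodType) (mul : V -> V -> V) (H : comm_rng_mul mul)
  (Hc : circle_invertible mul) g x : tau H Hc g x = circle mul g x.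
Proof. by rewrite permE. Qed.

Lemma tau_setE (V : finZmodType) (mul : V -> V -> V) (H : comm_rng_mul mul)
  (Hc : circle_invertible mul) (A : {set V}) :
  tau_set mul A = [set tau H Hc g | g in A].
Proof.
apply/setP=> s; rewrite inE; apply/existsP/imsetP => [[g /andP[gA /forallP E]]|[g gA ->]].
  by exists g => //; apply/permP => x; rewrite tauE; apply/eqP.
by exists g; rewrite gA /=; apply/forallP => x; rewrite tauE.
Qed.

Lemma tau_inj (V : finZmodType) (mul : V -> V -> V) (H : comm_rng_mul mul)
  (Hc : circle_invertible mul) : injective (tau H Hc).
Proof.
move=> g h /permP/(_ 0%R); by rewrite !tauE /circle !(mul0r_ H) !addr0.
Qed.

Lemma tauM (V : finZmodType) (mul : V -> V -> V) (H : comm_rng_mul mul)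
  (Hc : circle_invertible mul) g h : tau H Hc g * tau H Hc h = tau H Hc (circle mul h g).
Proof. by apply/permP=> x; rewrite permM !tauE (circleA H). Qed.

Lemma tau1 (V : finZmodType) (mul : V -> V -> V) (H : comm_rng_mul mul)
  (Hc : circle_invertible mul) : tau H Hc 0%R = 1.
Proof. by apply/permP => x; rewrite perm1 tauE (circle0x H). Qed.

Lemma tau_group_set (V : finZmodType) (mul : V -> V -> V) (H : comm_rng_mul mul)
  (Hc : circle_invertible mul) (A : {set V}) :
  (0%R : V) \in A -> {in A &, forall g h, circle mul g h \in A} ->
  group_set (tau_set mul A).
Proof.
move=> A0 AM; rewrite (tau_setE H Hc); apply/group_setP; split.
  by rewrite -(tau1 H Hc) imset_f.
by move=> _ _ /imsetP[g gA ->] /imsetP[h hA ->]; rewrite tauM imset_f // AM.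
Qed.

Lemma sylow_circle (V : finZmodType) (mul : V -> V -> V) (H : comm_rng_mul mul)
  p (Gp : {group V}) : Gp \in 'Syl_p([set: V]) ->
  {in Gp &, forall g h, circle mul g h \in Gp}.
Proof.
rewrite inE => HG g h gG hG; rewrite /circle.
have Hn : Gp <| [set: V] by rewrite -sub_abelian_normal ?zmod_abelian ?subsetT.
have mG : mul g h \in Gp.
  rewrite (mem_normal_Hall HG Hn) ?inE //.
  apply: pnat_dvd (mem_p_elt (pHall_pgroup HG) gG).
  rewrite order_dvdn zmodXgE -(mulMn_ H) -zmodXgE expg_order.
  apply/eqP; exact: (mul0l_ H).
by rewrite -!zmodMgE !groupM.
Qed.

Theorem corollary5p3 (V : finZmodType) (mul : V -> V -> V)
  (Hring : comm_rng_mul mul) (Hcirc : circle_invertible mul)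
  (p : nat) (Hp : prime p) (Hdiv : p %| #|V|)
  (Gp : {group V}) (HGp : Gp \in 'Syl_p([set: V])) :
  forall P : {group {perm V}},
    P \in 'Syl_p(T_set mul) <-> (P : {set {perm V}}) = tau_set mul Gp.
Proof.
have TGs : group_set (T_set mul).
  exact: (tau_group_set Hring Hcirc (in_setT _) (fun _ _ _ _ => in_setT _)).
have QGs : group_set (tau_set mul Gp).
  exact: (tau_group_set Hring Hcirc (group1 Gp) (sylow_circle Hring HGp)).
pose TG := Group TGs; pose QG := Group QGs.
have QSyl : p.-Sylow(TG) QG.
  apply/pHallP; split.
    by rewrite /= /T_set !(tau_setE Hring Hcirc); apply: imsetS; apply: subsetT.
  rewrite /= /T_set !(tau_setE Hring Hcirc) !card_imset; try exact: tau_inj.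
  by move: HGp; rewrite inE => /pHallP[_ ->].
have TGab : abelian TG.
  apply/centsP => s sT t tT.
  rewrite /= /T_set (tau_setE Hring Hcirc) in sT tT.
  case/imsetP: sT => g _ ->; case/imsetP: tT => h _ ->.
  by rewrite /commute !tauM (circleC Hring).
move=> P; split.
  rewrite inE => PSyl0; have PSyl : p.-Sylow(TG) P := PSyl0.
  have nP : P <| TG by rewrite -sub_abelian_normal // (pHall_sub PSyl).
  have nQ : QG <| TG by rewrite -sub_abelian_normal // (pHall_sub QSyl).
  apply/setP => s; case sT: (s \in TG).
    rewrite [s \in tau_set mul Gp](_ : _ = (s \in QG)) //.
    by rewrite (mem_normal_Hall QSyl nQ sT) (mem_normal_Hall PSyl nP sT).
  apply/idP/idP => sIn.
    by have := subsetP (pHall_sub PSyl) s sIn; rewrite sT.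
  by have := subsetP (pHall_sub QSyl) s sIn; rewrite sT.
move=> EP; rewrite inE.
have -> : P = QG by apply/val_inj.
exact: QSyl.
Qed.
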